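(* Let $R$ be a commutative ring and $S$ a multiplicative subset of $R$. Then $R$ has $u$-$S$-Noetherian spectrum if and only if the polynomial ring $R[X]$ has $u$-$S$-Noetherian spectrum (where $S$ is regarded as a multiplicative subset of $R[X]$ via $R\subseteq R[X]$).
   Context: A ring $A$ with multiplicative subset $S$ has uniformly $S$-Noetherian ($u$-$S$-Noetherian) spectrum if there exists a single $s\in S$ such that for every ideal $I$ of $A$ there is a finitely generated ideal $J\subseteq I$ with $sI\subseteq\sqrt{J}$ (so $sI\subseteq\sqrt J\subseteq\sqrt I$). *)

(* Defs.v *)
From HB Require Import structures.
From mathcomp Require Import all_boot all_order all_algebra.
Set Implicit Arguments. Unset Strict Implicit. Unset Printing Implicit Defensive.
Import GRing.Theory.
Local Open Scope ring_scope.

Definition mult_subset (R : comNzRingType) (S : R -> Prop) : Prop :=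
  S 1 /\ (forall a b, S a -> S b -> S (a * b)).

Definition is_ideal (R : comNzRingType) (I : R -> Prop) : Prop :=
  [/\ I 0, (forall x y, I x -> I y -> I (x + y)) &
      (forall a x, I x -> I (a * x))].

Definition ideal_span (R : comNzRingType) (l : seq R) : R -> Prop :=
  fun x => exists c : seq R, size c = size l /\
             x = \sum_(i < size l) c`_i * l`_i.

Definition fg_ideal (R : comNzRingType) (J : R -> Prop) : Prop :=
  exists l : seq R, forall x, J x <-> ideal_span l x.

Definition radical (R : comNzRingType) (J : R -> Prop) : R -> Prop :=
  fun x => exists n : nat, J (x ^+ n).

Definition u_S_noeth_spectrum (R : comNzRingType) (S : R -> Prop) : Prop :=
  exists s, S s /\
    forall I : R -> Prop, is_ideal I ->
      exists J : R -> Prop, fg_ideal J /\ (forall x, J x -> I x) /\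
        (forall x, I x -> radical J (s * x)).

Definition poly_mult_subset (R : comNzRingType) (S : R -> Prop) : {poly R} -> Prop :=
  fun p => exists s, S s /\ p = s%:P.

(* Main.v *)
Require Import Defs.
From mathcomp Require Import all_boot all_order all_algebra.
From mathcomp Require Import zify ring.
From mathcomp Require Import classical_sets.
From Stdlib Require Import Classical.
Set Implicit Arguments. Unset Strict Implicit. Unset Printing Implicit Defensive.
Import GRing.Theory.
Local Open Scope ring_scope.

Section Gen.
Variable T : comNzRingType.
Implicit Types (I J : T -> Prop) (l : seq T) (x y a : T).

Lemma ideal_sum I (X : Type) (r : seq X) (F : X -> T) :
  is_ideal I -> (forall i, I (F i)) -> I (\sum_(i <- r) F i).
Proof. by case=> I0 ID _ HF; apply: big_ind. Qed.

Lemma ideal_mulr I x a : is_ideal I -> I x -> I (x * a).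
Proof. by case=> _ _ IM Ix; rewrite mulrC; apply: IM. Qed.

Lemma ideal_opp I x : is_ideal I -> I x -> I (- x).
Proof. by case=> _ _ IM Ix; rewrite -mulN1r; apply: IM. Qed.

Lemma ideal_sub I x y : is_ideal I -> I x -> I y -> I (x - y).
Proof. by move=> hI Ix Iy; case: (hI) => _ ID _; apply: ID => //; apply: ideal_opp. Qed.

Lemma ideal_natmul I x n : is_ideal I -> I x -> I (x *+ n).
Proof. by case=> _ _ IM Ix; rewrite -mulr_natl; apply: IM. Qed.

Lemma span_nil x : ideal_span [::] x <-> x = 0.
Proof.
split; first by case=> c [_ ->]; rewrite big_ord0.
by move=> ->; exists [::]; rewrite big_ord0.
Qed.

Lemma span_cons a l x :
  ideal_span (a :: l) x <-> exists k y, ideal_span l y /\ x = k * a + y.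
Proof.
split.
  case=> [[|k c]] [//= /eqP]; rewrite eqSS => /eqP hc ->.
  exists k, (\sum_(i < size l) c`_i * l`_i); split; first by exists c.
  by rewrite big_ord_recl /=.
case=> k [y [[c [hc ->]] ->]]; exists (k :: c); split; first by rewrite /= hc.
by rewrite big_ord_recl /=.
Qed.

Lemma span_ideal l : is_ideal (ideal_span l).
Proof.
elim: l => [|a l [I0 ID IM]].
  split.
  - by apply/(span_nil 0).
  - by move=> x y /span_nil -> /span_nil ->; apply/(span_nil (0+0)); rewrite addr0.
  - by move=> b x /span_nil ->; apply/(span_nil (b*0)); rewrite mulr0.
split.
- by apply/span_cons; exists 0, 0; rewrite mul0r addr0.
- move=> x y /span_cons [k [u [hu ->]]] /span_cons [k' [v [hv ->]]].
  apply/span_cons; exists (k + k'), (u + v); split; first exact: ID.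
  by rewrite mulrDl -!addrA (addrCA u).
- move=> b x /span_cons [k [u [hu ->]]]; apply/span_cons; exists (b * k), (b * u).
  by split; [apply: IM | rewrite mulrDr mulrA].
Qed.

Lemma span_sub I l x : is_ideal I -> (forall y, y \in l -> I y) ->
  ideal_span l x -> I x.
Proof.
move=> hI; case: (hI) => I0 ID IM; elim: l x => [|a l IH] x hl.
  by move/span_nil ->.
case/span_cons => k [y [hy ->]]; apply: ID.
  by rewrite mulrC; apply: ideal_mulr => //; apply: hl; rewrite inE eqxx.
by apply: IH => // z hz; apply: hl; rewrite inE hz orbT.
Qed.

Lemma span_mem l x : x \in l -> ideal_span l x.
Proof.
elim: l => [//|a l IH]; rewrite inE => /orP [/eqP ->|hx]; apply/span_cons.
  exists 1, 0; split; last by rewrite mul1r addr0.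
  by case: (span_ideal l).
by exists 0, x; rewrite mul0r add0r; split => //; apply: IH.
Qed.

Lemma rad_mem J x : J x -> radical J x.
Proof. by move=> h; exists 1%N; rewrite expr1. Qed.

Lemma rad_mono J J' x : (forall z, J z -> J' z) -> radical J x -> radical J' x.
Proof. by move=> h [n hn]; exists n; apply: h. Qed.

Lemma rad_mul J a x : is_ideal J -> radical J x -> radical J (a * x).
Proof.
by case=> _ _ IM [n hn]; exists n; rewrite exprMn; apply: IM.
Qed.

Lemma rad_pow J x k : radical J (x ^+ k) -> radical J x.
Proof. by case=> n hn; exists (k * n)%N; rewrite exprM. Qed.

Lemma rad_add J x y : is_ideal J -> radical J x -> radical J y -> radical J (x + y).
Proof.
move=> hI [n hn] [m hm]; exists (n + m)%N; rewrite exprDn.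
apply: ideal_sum => // i; apply: ideal_natmul => //.
have [hi|hi] := leqP m i.
  rewrite (_ : y ^+ i = y ^+ (i - m) * y ^+ m); last by rewrite -exprD subnK.
  by rewrite mulrA; case: hI => _ _ IM; apply: IM.
rewrite (_ : x ^+ (n + m - i) = x ^+ (m - i) * x ^+ n); last first.
  by rewrite -exprD; congr (_ ^+ _); lia.
by rewrite -mulrA; case: hI => _ _ IM; apply: (IM); rewrite mulrC; apply: IM.
Qed.

Lemma ideal_powD J a j m : is_ideal J -> J j ->
  exists j', J j' /\ (a + j) ^+ m = a ^+ m + j'.
Proof.
move=> hI Jj; case: (hI) => I0 ID IM; elim: m => [|m [j' [Jj' hm]]].
  by exists 0; rewrite !expr0 addr0.
exists (j' * (a + j) + a ^+ m * j); split.
  by apply: ID; [apply: ideal_mulr | apply: IM].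
rewrite exprSr hm exprSr; ring.
Qed.

Lemma rad_colon J x y : is_ideal J -> radical J (x * y) ->
  radical (fun z => exists j k, J j /\ z = j + k * y) x -> radical J x.
Proof.
move=> hI [m hm] [n [j [k [Jj hx]]]].
have [j' [Jj' hj']] := ideal_powD (k * y) m hI Jj.
exists (n * m + m)%N; rewrite exprD exprM hx addrC hj' mulrDl.
case: (hI) => _ ID IM; apply: ID; last by apply: ideal_mulr.
by rewrite exprMn -mulrA -exprMn (mulrC y); apply: IM.
Qed.

End Gen.

Lemma span_map (T U : comNzRingType) (f : {rmorphism T -> U}) l x :
  ideal_span l x -> ideal_span (map f l) (f x).
Proof.
elim: l x => [|a l IH] x.
  by move/span_nil ->; apply/(span_nil (f 0)); rewrite rmorph0.
case/span_cons => k [y [hy ->]]; apply/span_cons; exists (f k), (f y).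
by rewrite rmorphD rmorphM; split => //; apply: IH.
Qed.

Lemma min_ex (X : Type) (A : X -> Prop) (m : X -> nat) :
  (exists x, A x) -> exists x, A x /\ forall y, A y -> (m x <= m y)%N.
Proof.
case=> x Ax; move: {2}(m x) (leqnn (m x)) => n; elim: n x Ax => [|n IH] x Ax hx.
  by exists x; split=> // y _; apply: leq_trans hx (leq0n _).
case: (classic (exists y, A y /\ (m y < m x)%N)) => [[y [Ay hy]]|hno].
  by apply: (IH y Ay); lia.
exists x; split=> // y Ay; rewrite leqNgt; apply/negP => h; apply: hno; exists y; split.
by [].
by [].
Qed.

Lemma rad_dropexp (T : comNzRingType) (J : T -> Prop) x y m : is_ideal J ->
  radical J (x * y ^+ m) -> radical J (x * y).
Proof.
move=> hI h; apply: (@rad_pow _ _ _ m.+1).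
rewrite (_ : (x * y) ^+ m.+1 = (x ^+ m * y) * (x * y ^+ m)).
  by apply: rad_mul.
rewrite exprMn exprS exprSr; move: (x ^+ m) (y ^+ m) => a b; ring.
Qed.

Lemma colon_ideal (T : comNzRingType) (J : T -> Prop) y : is_ideal J ->
  is_ideal (fun z => exists j k, J j /\ z = j + k * y).
Proof.
case=> I0 ID IM; split.
- by exists 0, 0; rewrite mul0r addr0.
- move=> _ _ [j [k [Jj ->]]] [j' [k' [Jj' ->]]]; exists (j + j'), (k + k').
  by split; [apply: ID | rewrite mulrDl -!addrA (addrCA (k * y))].
- move=> a _ [j [k [Jj ->]]]; exists (a * j), (a * k).
  by split; [apply: IM | rewrite mulrDr mulrA].
Qed.

Section Poly.
Variable R : comNzRingType.

Lemma back (S : R -> Prop) :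
  u_S_noeth_spectrum (poly_mult_subset S) -> u_S_noeth_spectrum S.
Proof.
case=> sp [[s [Ss ->]] H]; exists s; split => // I hI.
pose IX := fun g : {poly R} => forall i, I g`_i.
have hIX : is_ideal IX.
  case: (hI) => I0 ID IM; split.
  - by move=> i; rewrite coef0.
  - by move=> x y hx hy i; rewrite coefD; apply: ID.
  - by move=> a x hx i; rewrite coefM; apply: ideal_sum => // j; apply: IM.
case: (H IX hIX) => J [[l hl] [JI Hrad]].
exists (ideal_span (map (horner_eval 0) l)); split; first by exists (map (horner_eval 0) l).
split.
  move=> x; apply: span_sub => // y /mapP [g gl ->]; rewrite horner_evalE horner_coef0.
  by apply: JI; apply/hl; apply: span_mem.
move=> x Ix.
have IXx : IX x%:P by move=> i; rewrite coefC; case: eqP => _ //; case: hI.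
case: (Hrad _ IXx) => n /hl hn; exists n.
have := span_map (horner_eval 0) hn.
by rewrite rmorphXn /= horner_evalE -polyCM hornerC.
Qed.

Definition goodp (s : R) (P : {poly R} -> Prop) :=
  exists l : seq {poly R}, (forall y, y \in l -> P y) /\
    forall x, P x -> radical (ideal_span l) (s%:P * x).

Lemma key (s : R)
  (hR : forall I : R -> Prop, is_ideal I -> exists l : seq R,
     (forall y, y \in l -> I y) /\ forall x, I x -> radical (ideal_span l) (s * x))
  (P : {poly R} -> Prop) : is_ideal P ->
  (forall Q, is_ideal Q -> (forall x, P x -> Q x) -> (exists x, Q x /\ ~ P x) -> goodp s Q) ->
  goodp s P.
Proof.
move=> hP maxP; case: (hP) => P0 PD PM.
pose p := fun a : R => P a%:P.
have hp : is_ideal p.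
  split; [by rewrite /p polyC0 | move=> x y; rewrite /p polyCD; apply: PD
         | move=> a x; rewrite /p polyCM; apply: PM].
case: (hR p hp) => lp [lpP radp].
pose L := map polyC lp.
have LP : forall y, y \in L -> P y by move=> y /mapP [a ha ->]; exact: lpP.
have radL : forall g : {poly R}, (forall i, p g`_i) -> radical (ideal_span L) (s%:P * g).
  move=> g hg; rewrite -[g]coefK poly_def mulr_sumr.
  apply: (big_ind (radical (ideal_span L))).
  - by apply: rad_mem; case: (span_ideal L).
  - by move=> x y; apply: rad_add; apply: span_ideal.
  move=> i _; rewrite -mul_polyC mulrCA mulrA -polyCM mulrC.
  apply: rad_mul; first exact: span_ideal.
  case: (radp _ (hg i)) => n hn; exists n.
  by rewrite -rmorphXn mulrC; apply: (span_map polyC).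
have strip : forall n (g : {poly R}), (size g <= n)%N -> P g ->
    (forall h, P h -> (size h <= size g)%N -> p (lead_coef h)) -> forall i, p g`_i.
  elim=> [|n IH] g hs Pg hlc i.
    by move: hs; rewrite leqn0 size_poly_eq0 => /eqP ->; rewrite coef0; case: hp.
  have [->|gn0] := eqVneq g 0; first by rewrite coef0; case: hp.
  set g' := g - (lead_coef g)%:P * 'X^((size g).-1).
  have Pg' : P g'.
    by apply: ideal_sub => //; apply: ideal_mulr => //; apply: hlc.
  have sg0 : (0 < size g)%N by rewrite size_poly_gt0.
  have sg' : (size g' <= (size g).-1)%N.
    apply/leq_sizeP => j hj; rewrite coefB coefCM coefXn.
    case: eqP => [->|hne]; first by rewrite mulr1 lead_coefE subrr.
    rewrite mulr0 subr0; move/leq_sizeP: (leqnn (size g)); apply; move: hj hne sg0; case: (size g) => //= k; lia.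
  have sgg : (size g' <= size g)%N by apply: leq_trans sg' (leq_pred _).
  have Hg' : p g'`_i.
    apply: (IH g') => //; first by move: sg' hs sg0; case: (size g) => //= k; lia.
    by move=> h Ph hh; apply: hlc => //; apply: leq_trans hh sgg.
  have -> : g`_i = g'`_i + lead_coef g * ('X^((size g).-1))`_i.
    by rewrite /g' coefB coefCM subrK.
  case: (hp) => _ pD pM; apply: pD => //; rewrite mulrC; apply: pM.
  by apply: hlc.
case: (classic (exists f, P f /\ ~ p (lead_coef f))) => [hex|hno]; last first.
  exists L; split => // x Px; apply: radL => i.
  apply: (strip (size x)) => // h Ph _; apply: NNPP => hn; apply: hno; exists h; split.
  by [].
  by [].
have [f [[Pf pf] fmin]] := min_ex (fun f : {poly R} => size f) hex.
set c := lead_coef f.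
have fn0 : f != 0.
  by apply/negP => /eqP f0; apply: pf; rewrite /c f0 lead_coef0; case: hp.
have small : forall r, P r -> (size r < size f)%N -> forall i, p r`_i.
  move=> r Pr hr; apply: (strip (size r)) => // h Ph hh; apply: NNPP => hn.
  have := fmin h (conj Ph hn); lia.
pose Q := fun z => exists y k, P y /\ z = y + k * c%:P.
have hQ : is_ideal Q by apply: colon_ideal.
have PQ : forall x, P x -> Q x by move=> x Px; exists x, 0; rewrite mul0r addr0.
have [lq [lqQ radQ]] : goodp s Q.
  apply: maxP => //; exists c%:P; split; first by exists 0, 1; rewrite add0r mul1r.
  exact: pf.
have [ly [lyP lyQ]] : exists ly : seq {poly R}, (forall y, y \in ly -> P y) /\
    forall x, x \in lq -> exists y k, y \in ly /\ x = y + k * c%:P.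
  elim: (lq) lqQ => [|a l IH] hl.
    by exists [::].
  have : forall y, y \in l -> Q y by move=> y hy; apply: hl; rewrite inE hy orbT.
  move/IH => [ly [lyP lyQ]].
  have [y [k [Py ->]]] := hl a (mem_head _ _).
  exists (y :: ly); split.
    by move=> z; rewrite inE => /orP [/eqP ->|]; [|apply: lyP].
  move=> x; rewrite inE => /orP [/eqP ->|/lyQ [y' [k' [hy' ->]]]].
    by exists y, k; rewrite mem_head.
  by exists y', k'; rewrite inE hy' orbT.
pose J := f :: L ++ ly.
have JP : forall y, y \in J -> P y.
  move=> y; rewrite inE mem_cat => /orP [/eqP ->|/orP [/LP|/lyP]] //.
exists J; split => // g Pg.
have hJ := span_ideal J.
apply: (@rad_colon _ _ _ c%:P hJ); last first.
  apply: rad_mono (radQ g (PQ g Pg)) => z.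
  apply: (@span_sub _ (fun z => exists j k, ideal_span J j /\ z = j + k * c%:P)); first exact: colon_ideal.
  move=> x /lyQ [y [k [hy ->]]]; exists y, k; split => //.
  by apply: span_mem; rewrite inE mem_cat hy !orbT.
apply: (@rad_dropexp _ _ _ _ (Pdiv.Ring.rscalp g f) hJ).
have Hdiv := Pdiv.ComRing.rdivp_eq f g; rewrite -mul_polyC in Hdiv.
set q := Pdiv.Ring.rdivp g f in Hdiv; set r := Pdiv.Ring.rmodp g f in Hdiv.
have sr : (size r < size f)%N by apply: Pdiv.CommonRing.ltn_rmodpN0.
have Pr : P r.
  have -> : r = (lead_coef f ^+ Pdiv.Ring.rscalp g f)%:P * g - q * f by rewrite Hdiv addrC addKr.
  by apply: ideal_sub => //; apply: PM.
rewrite -mulrA (mulrC g) -rmorphXn /c Hdiv mulrDr.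
apply: rad_add => //.
  by apply: rad_mem; case: hJ => _ _ IM; apply: (IM); apply: IM; apply: span_mem; rewrite mem_head.
apply: rad_mono (radL r (small r Pr sr)) => z.
apply: span_sub => // y hy; apply: span_mem; by rewrite inE mem_cat hy orbT.
Qed.
End Poly.

Local Open Scope classical_set_scope.
Lemma fwd (R : comNzRingType) (S : R -> Prop) :
  u_S_noeth_spectrum S -> u_S_noeth_spectrum (poly_mult_subset S).
Proof.
case=> s [Ss H]; exists s%:P; split; first by exists s.
have hR : forall I : R -> Prop, is_ideal I -> exists l : seq R,
     (forall y, y \in l -> I y) /\ forall x, I x -> radical (ideal_span l) (s * x).
  move=> I hI; have [J [[l hl] [JI radJ]]] := H I hI.
  exists l; split; first by move=> y hy; apply: JI; apply/hl; apply: span_mem.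
  by move=> x Ix; apply: rad_mono (radJ x Ix) => z /hl.
move=> I0 hI0.
suff [l [lI radl]] : goodp s I0.
  exists (ideal_span l); split; first by exists l.
  by split => // x; apply: span_sub.
apply: NNPP => bad0.
pose PP := fun A : {poly R} -> Prop => (forall x, ~ A x) \/
  (is_ideal A /\ ~ goodp s A /\ forall x, I0 x -> A x).
have chainP : forall F : set (set {poly R}), F `<=` PP -> total_on F subset ->
    PP (\bigcup_(X in F) X).
  move=> F FP Ftot.
  case: (classic (exists X x, F X /\ X x)) => [[X0 [x0 [FX0 X0x0]]]|hno]; last first.
    by left => x [X FX Xx]; apply: hno; exists X, x.
  have nonemp : forall X z, F X -> X z ->
      is_ideal X /\ ~ goodp s X /\ forall x, I0 x -> X x.
    by move=> X z FX Xz; case: (FP X FX) => [h|h] //; case: (h z).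
  have [hX0 [bX0 iX0]] := nonemp X0 x0 FX0 X0x0.
  right; split; last split.
  - split.
    + by exists X0 => //; case: hX0.
    + move=> x y [X1 FX1 X1x] [X2 FX2 X2y].
      case: (Ftot X1 X2 FX1 FX2) => h.
        by exists X2 => //; case: (nonemp X2 y FX2 X2y) => [[_ ID _] _]; apply: ID => //; apply: h.
      by exists X1 => //; case: (nonemp X1 x FX1 X1x) => [[_ ID _] _]; apply: ID => //; apply: h.
    + move=> a x [X1 FX1 X1x]; exists X1 => //.
      by case: (nonemp X1 x FX1 X1x) => [[_ _ IM] _]; apply: IM.
  - case=> l [lU radU].
    have [Y [FY [[y Yy] lY]]] : exists Y, F Y /\ (exists y, Y y) /\ forall z, z \in l -> Y z.
      elim: (l) lU => [|a l' IH] hl.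
        by exists X0; split => //; split => //; exists x0.
      have : forall z, z \in l' -> (\bigcup_(X in F) X) z.
        by move=> z hz; apply: hl; rewrite inE hz orbT.
      move/IH => [Y [FY [[y Yy] lY]]].
      have [X FX Xa] := hl a (mem_head _ _).
      case: (Ftot X Y FX FY) => h.
        exists Y; split => //; split; first by exists y.
        by move=> z; rewrite inE => /orP [/eqP ->|/lY]; [apply: h|].
      exists X; split => //; split; first by exists a.
      by move=> z; rewrite inE => /orP [/eqP ->|/lY]; [|apply: h].
    have [_ [bY _]] := nonemp Y y FY Yy.
    apply: bY; exists l; split => // x Yx; apply: radU; exists Y.
    by [].
    by [].
  - by move=> x /iX0 hx; exists X0.
have [A [PA maxA]] := Zorn_bigcup chainP.
case: PA => [hA|[hA [bA iA]]].
  apply: (maxA I0); last by right; split => //; split.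
  split; first by move=> x /hA.
  by move=> h; apply: (hA 0); apply: h; case: hI0.
apply: bA; apply: key => // Q hQ AQ [x [Qx nAx]].
apply: NNPP => bQ; apply: (maxA Q); last first.
  by right; split => //; split => // y /iA /AQ.
by split => // h; apply: nAx; apply: h.
Qed.

Theorem theorem4p3 (R : comNzRingType) (S : R -> Prop) :
  mult_subset S ->
  (u_S_noeth_spectrum S <-> u_S_noeth_spectrum (poly_mult_subset S)).
Proof. by move=> _; split; [apply: fwd | apply: back]. Qed.
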